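(* Let $f:\mathbb{R}^d\to\mathbb{R}$ and $P:\mathbb{R}^d\to\mathbb{R}^s$ be continuously differentiable, $D\subseteq\mathbb{R}^s$ closed, $\Omega=\{z\mid P(z)\in D\}$. Assume that $\bar z\in\Omega$ is a sharp minimum for the problem $\min f(z)$ s.t. $P(z)\in D$, that GGCQ holds at $\bar z$, and that the mapping $u\rightrightarrows\nabla P(\bar z)u-T_D(P(\bar z))$ is metrically subregular at $(0,0)$. Then there exist $w\in T_D(P(\bar z))$ and a multiplier $w^\ast\in\widehat N_{T_D(P(\bar z))}(w)$ such that $\nabla f(\bar z)+\nabla P(\bar z)^\ast w^\ast=0$.
   Context: Tangent cone $T_\Omega(\bar z)=\{w\mid \exists t_k\downarrow0,\ w_k\to w,\ \bar z+t_kw_k\in\Omega\}$; polar cone $K^\ast=\{z^\ast\mid\langle z^\ast,w\rangle\le0\ \forall w\in K\}$; regular normal cone $\widehat N_\Omega(\bar z)=(T_\Omega(\bar z))^\ast$. Linearized tangent cone $T^{\rm lin}_{P,D}(\bar z)=\{u\mid\nabla P(\bar z)u\in T_D(P(\bar z))\}$. GGCQ holds at $\bar z$ if $\widehat N_\Omega(\bar z)=(T^{\rm lin}_{P,D}(\bar z))^\ast$. A point $\bar z\in\Omega$ is a sharp minimum if there is $\alpha>0$ with $f(z)\ge f(\bar z)+\alpha\|z-\bar z\|$ for all $z\in\Omega$ near $\bar z$. A mapping $M$ is metrically subregular at $(\bar z,\bar w)\in\operatorname{gph}M$ if there are a neighborhood $W$ of $\bar z$ and $\kappa>0$ with $\operatorname{dist}(z,M^{-1}(\bar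 w))\le\kappa\operatorname{dist}(\bar w,M(z))$ for $z\in W$. *)

(* Defs.v *)
From HB Require Import structures.
From mathcomp Require Import all_boot all_order all_algebra.
From mathcomp Require Import all_classical all_reals all_analysis.
Set Implicit Arguments. Unset Strict Implicit. Unset Printing Implicit Defensive.
Import Order.TTheory GRing.Theory Num.Theory.
Import numFieldNormedType.Exports.
Local Open Scope classical_set_scope.
Local Open Scope ring_scope.

Section Defs.
Variable R : realType.

Definition dotp (n : nat) (u v : 'rV[R]_n) : R := (u *m v^T) 0 0.

Definition grad (n : nat) (f : 'rV[R]_n -> R) (z : 'rV[R]_n) : 'rV[R]_n :=
  \row_(i < n) ('d f z) (delta_mx 0 i).

Definition tangent_cone (n : nat) (A : set 'rV[R]_n) (z : 'rV[R]_n) : set 'rV[R]_n :=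
  [set w | exists (t : nat -> R) (wk : nat -> 'rV[R]_n),
      (forall k, 0 < t k) /\ t @ \oo --> (0 : R) /\ wk @ \oo --> w /\
      (forall k, A (z + t k *: wk k))].

Definition polar (n : nat) (K : set 'rV[R]_n) : set 'rV[R]_n :=
  [set zs | forall w, K w -> dotp zs w <= 0].

Definition reg_normal_cone (n : nat) (A : set 'rV[R]_n) (z : 'rV[R]_n) : set 'rV[R]_n :=
  polar (tangent_cone A z).

Definition lin_tangent_cone (d s : nat) (P : 'rV[R]_d -> 'rV[R]_s)
  (D : set 'rV[R]_s) (z : 'rV[R]_d) : set 'rV[R]_d :=
  [set u | tangent_cone D (P z) ('d P z u)].

Definition GGCQ (d s : nat) (P : 'rV[R]_d -> 'rV[R]_s) (D : set 'rV[R]_s)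
  (z : 'rV[R]_d) : Prop :=
  reg_normal_cone [set x | D (P x)] z = polar (lin_tangent_cone P D z).

Definition sharp_min (d : nat) (f : 'rV[R]_d -> R) (Omega : set 'rV[R]_d)
  (zb : 'rV[R]_d) : Prop :=
  Omega zb /\ exists alpha : R, 0 < alpha /\
    \forall z \near zb, Omega z -> f zb + alpha * `|z - zb| <= f z.

(* distance from a point to a set (+oo for the empty set) *)
Definition dist_set (n : nat) (x : 'rV[R]_n) (A : set 'rV[R]_n) : \bar R :=
  ereal_inf [set (`|x - y|)%:E | y in A].

Definition metric_subregular (m n : nat) (M : 'rV[R]_m -> set 'rV[R]_n)
  (zb : 'rV[R]_m) (wb : 'rV[R]_n) : Prop :=
  M zb wb /\ exists W : set 'rV[R]_m, nbhs zb W /\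
    exists kappa : R, 0 < kappa /\
      forall z, W z ->
        (dist_set z [set x | M x wb] <= kappa%:E * dist_set wb (M z))%E.

End Defs.

(* Main.v *)
Require Import Defs.
From HB Require Import structures.
From mathcomp Require Import all_boot all_order all_algebra.
From mathcomp Require Import all_classical all_reals all_analysis.
Import Order.TTheory GRing.Theory Num.Theory.
Import numFieldNormedType.Exports.
Local Open Scope classical_set_scope.
Local Open Scope ring_scope.
Set Implicit Arguments. Unset Strict Implicit. Unset Printing Implicit Defensive.

From mathcomp Require Import ring lra.

Section Basics.
Variable R : realType.

Lemma dotpE n (u v : 'rV[R]_n) : dotp u v = \sum_i u 0 i * v 0 i.
Proof. by rewrite /dotp mxE; apply: eq_bigr => i _; rewrite mxE. Qed.

Lemma dotpC n (u v : 'rV[R]_n) : dotp u v = dotp v u.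
Proof. by rewrite !dotpE; apply: eq_bigr => i _; rewrite mulrC. Qed.

Lemma dotpDr n (u v w : 'rV[R]_n) : dotp u (v + w) = dotp u v + dotp u w.
Proof. by rewrite !dotpE -big_split; apply: eq_bigr => i _; rewrite mxE mulrDr. Qed.

Lemma dotpZr n a (u v : 'rV[R]_n) : dotp u (a *: v) = a * dotp u v.
Proof. by rewrite !dotpE mulr_sumr; apply: eq_bigr => i _; rewrite mxE mulrCA. Qed.

Lemma dotpNr n (u v : 'rV[R]_n) : dotp u (- v) = - dotp u v.
Proof. by rewrite -scaleN1r dotpZr mulN1r. Qed.

Lemma dotpBr n (u v w : 'rV[R]_n) : dotp u (v - w) = dotp u v - dotp u w.
Proof. by rewrite dotpDr dotpNr. Qed.

Lemma dotpDl n (u v w : 'rV[R]_n) : dotp (v + w) u = dotp v u + dotp w u.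
Proof. by rewrite dotpC dotpDr !(dotpC u). Qed.
Lemma dotpZl n a (u v : 'rV[R]_n) : dotp (a *: v) u = a * dotp v u.
Proof. by rewrite dotpC dotpZr dotpC. Qed.
Lemma dotpNl n (u v : 'rV[R]_n) : dotp (- v) u = - dotp v u.
Proof. by rewrite dotpC dotpNr dotpC. Qed.
Lemma dotpBl n (u v w : 'rV[R]_n) : dotp (v - w) u = dotp v u - dotp w u.
Proof. by rewrite dotpDl dotpNl. Qed.

Lemma dotp0r n (u : 'rV[R]_n) : dotp u 0 = 0.
Proof. by rewrite dotpE big1 // => i _; rewrite mxE mulr0. Qed.

Lemma dotp_delta n (u : 'rV[R]_n) i : dotp u (delta_mx 0 i) = u 0 i.
Proof.
rewrite dotpE (bigD1 i) //= mxE !eqxx mulr1 big1 ?addr0 // => j ji.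
by rewrite mxE (negbTE ji) andbF mulr0.
Qed.

Lemma dotp_ge0 n (u : 'rV[R]_n) : 0 <= dotp u u.
Proof. by rewrite dotpE sumr_ge0 // => i _; rewrite -expr2 sqr_ge0. Qed.

Lemma norm_entry n (u : 'rV[R]_n) i : `|u 0 i| <= `|u|.
Proof.
have -> : `|u| = mx_norm u by [].
rewrite mx_normrE.
by apply/bigmax_geP; right; exists (0, i).
Qed.

Lemma norm_argmax n (u : 'rV[R]_n) : u != 0 -> exists i, `|u| = `|u 0 i|.
Proof.
move=> u0; have : mx_norm u != 0.
  by apply: contra u0 => /eqP/mx_norm_eq0 ->.
move=> /mx_norm_neq0 [[i j] /= E]; exists j.
by have -> : `|u| = mx_norm u by []; rewrite E (ord1 i).
Qed.

Lemma norm_sq_dotp n (u : 'rV[R]_n) : `|u| ^+ 2 <= dotp u u.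
Proof.
have [->|u0] := eqVneq u 0; first by rewrite normr0 expr0n dotp0r.
have [i ->] := norm_argmax u0.
rewrite dotpE (bigD1 i) //= real_normK ?num_real // -expr2 lerDl.
by rewrite sumr_ge0 // => j _; rewrite -expr2 sqr_ge0.
Qed.

Lemma dotp_le n (u v : 'rV[R]_n) : dotp u v <= \sum_i `|u 0 i| * `|v|.
Proof.
rewrite dotpE; apply: ler_sum => i _.
apply: le_trans (ler_norm _) _; rewrite normrM ler_wpM2l //; exact: norm_entry.
Qed.

Lemma dotp_mulmx m n (w : 'rV[R]_n) (J : 'M[R]_(m, n)) (u : 'rV[R]_m) :
  dotp w (u *m J) = dotp (w *m J^T) u.
Proof. by rewrite /dotp trmx_mul mulmxA. Qed.

End Basics.

Section Tangent.
Variable R : realType.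
Variable n : nat.
Implicit Types (A : set 'rV[R]_n) (z w : 'rV[R]_n).

Definition tc_eps A z w := forall e del : R, 0 < e -> 0 < del ->
  exists t (v : 'rV[R]_n), [/\ 0 < t, t < del, `|v - w| < e & A (z + t *: v)].

Lemma tangent_coneP A z w : tangent_cone A z w <-> tc_eps A z w.
Proof.
split.
  move=> [t [wk [tp [t0 [wkw Awk]]]]] e del e0 del0.
  move/cvgrPdist_lt : t0 => /(_ _ del0) t0.
  move/cvgrPdist_lt : wkw => /(_ _ e0) wkw.
  have [k [tk wk']] := filter_ex (filterI t0 wkw).
  exists (t k), (wk k); split => //.
    by move: tk; rewrite sub0r normrN gtr0_norm.
  by rewrite distrC.
move=> H.
have H' : forall k : nat, exists tv : R * 'rV[R]_n,
    [/\ 0 < tv.1, tv.1 < k.+1%:R^-1, `|tv.2 - w| < k.+1%:R^-1 & A (z + tv.1 *: tv.2)].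
  move=> k; have kp : 0 < k.+1%:R^-1 :> R by rewrite invr_gt0 ltr0n.
  have [t [v [? ? ? ?]]] := H _ _ kp kp.
  by exists (t, v).
pose tv k := proj1_sig (cid (H' k)).
have tvP k := proj2_sig (cid (H' k)).
exists (fun k => (tv k).1), (fun k => (tv k).2); split; last split; last split.
- by move=> k; have [] := tvP k.
- apply/cvgrPdist_lt => e e0.
  have := near_infty_natSinv_lt (PosNum e0); apply: filterS => k /= ke.
  have [t0 t1 _ _] := tvP k.
  by rewrite sub0r normrN gtr0_norm //; apply: lt_trans ke.
- apply/cvgrPdist_lt => e e0.
  have := near_infty_natSinv_lt (PosNum e0); apply: filterS => k /= ke.
  have [_ _ t2 _] := tvP k.
  by rewrite distrC; apply: lt_trans ke.
- by move=> k; have [] := tvP k.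
Qed.

Lemma tangent_cone_closed A z : closed (tangent_cone A z).
Proof.
move=> w cw; apply/tangent_coneP => e del e0 del0.
have e20 : 0 < e / 2 by rewrite divr_gt0.
have [w' [Tw' ww']] := cw _ (nbhsx_ballx w (e / 2) e20).
have [t [v [t0 tdel vw' Av]]] := (proj1 (tangent_coneP A z w')) Tw' _ _ e20 del0.
exists t, v; split => //.
move: ww'; rewrite -ball_normE /= => ww'.
rewrite -(subrK w' v) -addrA (le_lt_trans (ler_normD _ _)) //.
by rewrite (splitr e) ltrD // distrC.
Qed.

Lemma tangent_cone_scale A z w (l : R) : 0 < l ->
  tangent_cone A z w -> tangent_cone A z (l *: w).
Proof.
move=> l0 /tangent_coneP H; apply/tangent_coneP => e del e0 del0.
have el : 0 < e / l by rewrite divr_gt0.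
have dl : 0 < del * l by rewrite mulr_gt0.
have [t [v [t0 tdel vw Av]]] := H _ _ el dl.
exists (t / l), (l *: v); split.
- by rewrite divr_gt0.
- by rewrite ltr_pdivrMr.
- by rewrite -scalerBr normrZ gtr0_norm // -ltr_pdivlMl // mulrC.
- by rewrite scalerA mulrVK // unitfE gt_eqF.
Qed.

Lemma tangent_cone0 A z : A z -> tangent_cone A z 0.
Proof.
move=> Az; apply/tangent_coneP => e del e0 del0.
exists (del / 2), 0; split.
- by rewrite divr_gt0.
- by rewrite ltr_pdivrMr // ltr_pMr // ltr1n.
- by rewrite subrr normr0.
- by rewrite scaler0 addr0.
Qed.

End Tangent.

Section Step1.
Variable R : realType.
Variable d : nat.

Lemma diff_dotp (f : 'rV[R]_d -> R) z : 
  forall u, 'd f z u = dotp (grad f z) u.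
Proof.
move=> u; rewrite {1}(row_sum_delta u) linear_sum dotpE.
by apply: eq_bigr => i _; rewrite linearZ /= mxE mulrC.
Qed.

Lemma sharp_tangent (f : 'rV[R]_d -> R) (Om : set 'rV[R]_d) zb (a : R) :
  differentiable f zb -> 0 < a ->
  (\forall z \near zb, Om z -> f zb + a * `|z - zb| <= f z) ->
  forall u, tangent_cone Om zb u -> a / 2 * `|u| <= 'd f zb u.
Proof.
move=> df a0 near_sharp u [t [wk [tp [t0 [wku Om_k]]]]].
have a20 : 0 < a / 2 by rewrite divr_gt0.
have /eqaddoP lo := diff_locally df.
have lo2 := lo _ a20.
have hk0 : (fun k => t k *: wk k) @ \oo --> (0 : 'rV[R]_d).
  by rewrite -(scale0r u); apply: cvgZ.
have zhk : (fun k => zb + t k *: wk k) @ \oo --> zb.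
  by rewrite -{2}(addr0 zb); apply: cvgD => //; exact: cvg_cst.
have E1 := hk0 _ lo2.
have E2 := zhk _ near_sharp.
have dfc : continuous ('d f zb) := diff_continuous df.
have cv : (fun k => 'd f zb (wk k) - a / 2 * `|wk k|) @ \oo -->
          'd f zb u - a / 2 * `|u|.
  apply: cvgB.
    exact: (continuous_cvg _ (dfc u) wku).
  apply: cvgMl_tmp; exact: cvg_norm.
rewrite -subr_ge0; apply: (cvgr_to_ge cv).
near=> k.
have H1 : `|f (t k *: wk k + zb) - (f zb + 'd f zb (t k *: wk k))| <=
          a / 2 * `|t k *: wk k|.
  by near: k; apply: E1.
have H2 : f zb + a * `|zb + t k *: wk k - zb| <= f (zb + t k *: wk k).
  have : Om (zb + t k *: wk k) -> f zb + a * `|zb + t k *: wk k - zb| <= f (zb + t k *: wk k).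
    by near: k; apply: E2.
  by apply; exact: Om_k.
move: H1 H2; rewrite addrAC subrr add0r [zb + _]addrC linearZ /= normrZ gtr0_norm //.
move=> /ler_normlP [H1a H1b] H2.
rewrite -(pmulr_rge0 _ (tp k)) mulrBr [t k * (a / 2 * _)]mulrCA.
move: H1a H1b H2; set X := f _; set Y := 'd f zb _ => H1a H1b H2.
rewrite -[t k *: Y]/(t k * Y) in H1a H1b.
move: H1a H1b H2; move: (t k * Y) (t k * `|wk k|) (f zb) X => T M F0 X0.
lra.
Unshelve. all: by end_near.
Qed.

End Step1.

Section Step2.
Variable R : realType.
Variables d s : nat.

Lemma sign_le (c x : R) : (c = 1 \/ c = -1) -> c * x <= `|x|.
Proof.
by case=> ->; rewrite ?mul1r ?mulN1r ?ler_norm // -normrN ler_norm.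
Qed.

Lemma ggcq_growth (P : 'rV[R]_d -> 'rV[R]_s) D zb (g : 'rV[R]_d) (b : R) :
  0 < b -> GGCQ P D zb ->
  (forall u, tangent_cone [set x | D (P x)] zb u -> b * `|u| <= dotp g u) ->
  forall u, lin_tangent_cone P D zb u -> b * `|u| <= dotp g u.
Proof.
move=> b0 gg H u Tu.
have [->|u0] := eqVneq u 0; first by rewrite normr0 mulr0 dotp0r.
have [i ui] := norm_argmax u0.
pose c : R := if 0 <= u 0 i then 1 else -1.
have c1 : c = 1 \/ c = -1 by rewrite /c; case: ifP; [left|right].
have cu : c * u 0 i = `|u|.
  rewrite ui /c; case: ifPn => h; first by rewrite mul1r ger0_norm.
  by rewrite mulN1r ltr0_norm // ltNge.
pose v := - g + b *: (c *: delta_mx 0 i).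
have dv x : dotp v x = - dotp g x + b * (c * x 0 i).
  by rewrite dotpDl dotpNl !dotpZl [dotp (delta_mx _ _) _]dotpC dotp_delta.
have : reg_normal_cone [set x | D (P x)] zb v.
  move=> w Tw; rewrite dv.
  have := H w Tw; have := sign_le (w 0 i) c1; have := norm_entry w i.
  have := ltW b0.
  move: (dotp g w) (w 0 i) (`|w|) (`|w 0 i|) => G W N Ni; nra.
rewrite gg => /(_ u Tu); rewrite dv cu; lra.
Qed.

End Step2.

Section Step3.
Variable R : realType.
Variables d s : nat.

Lemma dotp_lower n (g x : 'rV[R]_n) : - ((\sum_i `|g 0 i|) * `|x|) <= dotp g x.
Proof.
rewrite lerNl -dotpNl; apply: le_trans (dotp_le _ _) _.
by rewrite mulr_suml; apply: ler_sum => i _; rewrite mxE normrN.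
Qed.

Lemma subreg_bound (A : {linear 'rV[R]_d -> 'rV[R]_s}) (K : set 'rV[R]_s)
  (g : 'rV[R]_d) (b : R) :
  0 < b -> (forall y l, 0 < l -> K y -> K (l *: y)) ->
  (forall u, K (A u) -> b * `|u| <= dotp g u) ->
  metric_subregular (fun u => [set y | exists k, K k /\ y = A u - k]) 0 0 ->
  exists C, 0 < C /\ forall u y, K y -> b * `|u| - C * `|A u - y| <= dotp g u.
Proof.
move=> b0 Kcone Hlin [_ [W [nW [ka [ka0 HW]]]]].
have [r r0 rW] := (proj1 (nbhs_ballP _ _)) nW.
set G := \sum_i `|g 0 i|.
have G0 : 0 <= G by rewrite sumr_ge0.
have bG : 0 < b + G by rewrite ltr_pwDl.
exists ((b + G) * ka); split; first by rewrite mulr_gt0.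
have loc : forall u y, `|u| < r -> K y ->
    b * `|u| - (b + G) * ka * `|A u - y| <= dotp g u.
  move=> u y ur Ky.
  have Wu : W u by apply: rW; rewrite -ball_normE /= sub0r normrN.
  have H := HW u Wu.
  set del := `|A u - y|.
  have H2 : (dist_set 0 [set z | exists k, K k /\ (z = A u - k)%R] <= del%:E)%E.
    apply: ereal_inf_lbound; exists (A u - y); first by exists y.
    by rewrite sub0r normrN.
  have H3 : (dist_set u [set x | exists k, K k /\ (0 = A x - k)%R] <= (ka * del)%:E)%E.
    apply: (le_trans H); rewrite EFinM lee_pmul2l //; exact: ltW.
  apply/ler_addgt0Pr => e e0.
  have ee : 0 < e / (b + G) by rewrite divr_gt0.
  have H4 : (dist_set u [set x | exists k, K k /\ (0 = A x - k)%R] < (ka * del + e / (b + G))%:E)%E.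
    by apply: (le_lt_trans H3); rewrite lte_fin ltrDl.
  have [_ [x [k [Kk Ek]] <-] ] := ereal_inf_lt H4.
  rewrite lte_fin => ux.
  have Kx : K (A x) by move/eqP: Ek; rewrite eq_sym subr_eq0 => /eqP ->.
  have gx := Hlin x Kx.
  have gux := dotp_lower g (u - x).
  have -> : dotp g u = dotp g x + dotp g (u - x) by rewrite dotpBr addrC subrK.
  have nu : `|u| <= `|x| + `|u - x|.
    by rewrite -{1}(subrK x u) addrC (le_trans (ler_normD _ _)) // addrC.
  rewrite -/G in gux.
  have : (b + G) * `|u - x| <= (b + G) * (ka * del + e / (b + G)).
    by rewrite ler_pM2l // ltW.
  rewrite mulrDr [(b + G) * (e / _)]mulrC divfK ?gt_eqF //.
  move: (`|u - x|) (`|x|) (`|u|) nu gx gux => N X U.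
  move=> *; nra.
move=> u y Ky.
pose l := r / (2 * (`|u| + 1)).
have u1 : 0 < `|u| + 1 by rewrite ltr_pwDr.
have l0 : 0 < l by rewrite divr_gt0 // mulr_gt0.
have lu : `|l *: u| < r.
  rewrite normrZ gtr0_norm // /l mulrAC ltr_pdivrMr ?mulr_gt0 //.
  rewrite ltr_pM2l //; lra.
have := loc _ _ lu (Kcone _ _ l0 Ky).
rewrite [A (l *: u)]linearZ -scalerBr normrZ (gtr0_norm l0) normrZ (gtr0_norm l0) dotpZr.
move: (l) l0 => L L0 H; rewrite -(ler_pM2l L0) mulrBr.
move: H; move: (`|u|) (`|A u - y|) (dotp g u) => N M X; lra.
Qed.

End Step3.

Section Step4.
Variable R : realType.

Lemma dotp_continuous (T : topologicalType) n (h1 h2 : T -> 'rV[R]_n) :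
  continuous h1 -> continuous h2 -> continuous (fun p => dotp (h1 p) (h2 p)).
Proof.
move=> c1 c2.
have -> : (fun p => dotp (h1 p) (h2 p)) =
          \sum_(i < n) (fun p => h1 p 0 i * h2 p 0 i).
  by rewrite fct_sumE; apply: funext => p; rewrite dotpE.
elim/big_ind : _ => //.
- by move=> x; exact: cvg_cst.
- by move=> f g cf cg x; apply: continuousD; [exact: cf|exact: cg].
- move=> i _ x; apply: cvgM.
  + exact: (continuous_cvg _ (@coord_continuous R 1 n 0 i (h1 x)) (c1 x)).
  + exact: (continuous_cvg _ (@coord_continuous R 1 n 0 i (h2 x)) (c2 x)).
Qed.

Variables d s : nat.

Lemma closed_normle n (r : R) : closed [set u : 'rV[R]_n | `|u| <= r].
Proof.
apply: (@preimage_closed _ _ (fun u : 'rV[R]_n => `|u|) [set x | x <= r]).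
  by move=> x _; exact: norm_continuous.
exact: closed_le.
Qed.

Lemma bounded_normle n (r : R) : bounded_set [set u : 'rV[R]_n | `|u| <= r].
Proof.
exists r; split; first by rewrite num_real.
by move=> M rM u /= ur; apply: (le_trans ur); exact: ltW.
Qed.

Lemma exists_min (A : {linear 'rV[R]_d -> 'rV[R]_s}) (K : set 'rV[R]_s)
  (g : 'rV[R]_d) (b C : R) :
  continuous A -> closed K -> K 0 -> 0 < b -> 0 < C ->
  (forall u y, K y -> b * `|u| - C * `|A u - y| <= dotp g u) ->
  exists u y, K y /\ forall u' y', K y' ->
    dotp g u + dotp (A u - y) (A u - y) <= dotp g u' + dotp (A u' - y') (A u' - y').
Proof.
move=> Ac Kc K0 b0 C0 HC.
have [a a0 Aa] := linear_lipschitz Ac.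
pose Phi (p : 'rV[R]_d * 'rV[R]_s) := dotp g p.1 + dotp (A p.1 - p.2) (A p.1 - p.2).
have lowb : forall u y, K y ->
    b * `|u| - C * `|A u - y| + `|A u - y| ^+ 2 <= Phi (u, y).
  move=> u y Ky; rewrite /Phi /=.
  by apply: lerD; [exact: HC | exact: norm_sq_dotp].
pose R1 := C ^+ 2 / b.
pose R2 := a * R1 + 2 * C.
pose S := [set u : 'rV[R]_d | `|u| <= R1] `*` (K `&` [set y | `|y| <= R2]).
have R10 : 0 <= R1.
  by apply: divr_ge0; [exact: sqr_ge0| exact: ltW].
have R20 : 0 <= R2.
  by apply: addr_ge0; apply: mulr_ge0 => //; apply: ltW.
have S0 : S (0, 0).
  by rewrite /S /= !normr0; split => //; split.
have cS : compact S.
  apply: compact_setX.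
    by apply: bounded_closed_compact; [exact: bounded_normle|exact: closed_normle].
  apply: bounded_closed_compact.
    have [M [Mr HM]] := bounded_normle s R2.
    by exists M; split => // M' MM' y [_ /HM]; apply.
  by apply: closedI => //; exact: closed_normle.
have cPhi : continuous Phi.
  have c1 : continuous (fun q : 'rV[R]_d * 'rV[R]_s => dotp g q.1).
    by apply: (@dotp_continuous _ _ (fun=> g) fst); [move=> ?; exact: cvg_cst| move=> ?; exact: cvg_fst].
  have c2 : continuous (fun q : 'rV[R]_d * 'rV[R]_s => dotp (A q.1 - q.2) (A q.1 - q.2)).
    apply: dotp_continuous => q;
    (apply: (@cvgB _ _ _ _ _ (fun p => A p.1) snd); [apply: (continuous_cvg _ (Ac _)); exact: cvg_fst | exact: cvg_snd]).
  by move=> p; exact: (cvgD (c1 p) (c2 p)).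
have [[u y] /set_mem [/= Hu [Ky Hy]] minS] :=
  compact_EVT_min (ex_intro _ _ S0) cS (continuous_subspaceT cPhi).
exists u, y; split => // u' y' Ky'.
have Phi0 : Phi (0, 0) = 0 by rewrite /Phi /= linear0 subr0 !dotp0r addr0.
have Hm : Phi (u, y) <= 0 by rewrite -Phi0; apply: minS; exact/mem_set.
change (Phi (u, y) <= Phi (u', y')).
have [Su'|NSu'] := pselect (S (u', y')).
  by apply: minS; exact/mem_set.
apply: (le_trans Hm); apply: ltW.
have L := lowb u' y' Ky'.
apply: lt_le_trans L.
move: NSu' => /not_andP [/negP|/not_andP [//|/negP]]; rewrite -ltNge => H.
  have : C ^+ 2 < b * `|u'| by rewrite /R1 ltr_pdivrMr // mulrC in H.
  have : 0 <= (`|A u' - y'| - C / 2) ^+ 2 by exact: sqr_ge0.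
  move: (b * `|u'|) (`|A u' - y'|) => X D; nra.
have [Hu'|Hu'] := leP (`|u'|) R1; last first.
  have : C ^+ 2 < b * `|u'| by rewrite /R1 ltr_pdivrMr // mulrC in Hu'.
  have : 0 <= (`|A u' - y'| - C / 2) ^+ 2 by exact: sqr_ge0.
  move: (b * `|u'|) (`|A u' - y'|) => X D; nra.
have Au := Aa u'.
have tri : `|y'| <= `|A u'| + `|A u' - y'|.
  by rewrite -{1}(subKr (A u') y') (le_trans (ler_normB _ _)) // addrC.
have aR : a * `|u'| <= a * R1 by rewrite ler_pM2l.
have hD : 2 * C < `|A u' - y'|.
  rewrite /R2 in H; move: H tri Au aR.
  move: (`|y'|) (`|A u'|) (`|A u' - y'|) (a * `|u'|) (a * R1) => Y1 A1 D1 AU AR; lra.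
have bu : 0 <= b * `|u'| by rewrite mulr_ge0 // ltW.
move: (b * `|u'|) (`|A u' - y'|) bu hD => X D bu hD; nra.
Qed.

End Step4.

Section Step5.
Variable R : realType.
Variables d s : nat.

Lemma quad0 (c B : R) : 0 <= B -> (forall t, 0 <= t * c + t ^+ 2 * B) -> c = 0.
Proof.
move=> B0 H.
have B1 : B + 1 != 0 by rewrite gt_eqF // ltr_pwDr.
set q := c / (B + 1).
have cq : c = q * (B + 1) by rewrite /q divfK.
have := H (- q); rewrite cq => H'.
have : q ^+ 2 <= 0 by nra.
rewrite le_eqVlt ltNge sqr_ge0 orbF sqrf_eq0 => /eqP q0.
by rewrite q0 mul0r.
Qed.

Lemma dotp_expand n (r w : 'rV[R]_n) (t : R) :
  dotp (r + t *: w) (r + t *: w) = dotp r r + t * (2 * dotp r w) + t ^+ 2 * dotp w w.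
Proof.
rewrite !dotpDl !dotpDr !dotpZl !dotpZr [dotp w r]dotpC.
rewrite expr2; ring.
Qed.

Lemma foc_u (A : {linear 'rV[R]_d -> 'rV[R]_s}) (K : set 'rV[R]_s) (g : 'rV[R]_d) u y :
  K y -> (forall u' y', K y' ->
    dotp g u + dotp (A u - y) (A u - y) <= dotp g u' + dotp (A u' - y') (A u' - y')) ->
  forall v, dotp g v + 2 * dotp (A u - y) (A v) = 0.
Proof.
move=> Ky H v.
apply: (quad0 (dotp_ge0 (A v))) => t.
have := H (u + t *: v) y Ky.
rewrite [A (u + t *: v)]linearD [A (t *: v)]linearZ addrAC dotp_expand dotpDr dotpZr.
set X := dotp _ _; set Y := dotp _ _; set Z := dotp _ _.
move=> h; rewrite -subr_ge0; rewrite -subr_ge0 in h.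
by apply: le_trans h _; rewrite le_eqVlt; apply/orP; left; apply/eqP; ring.
Qed.

Lemma foc_y (A : {linear 'rV[R]_d -> 'rV[R]_s}) (K : set 'rV[R]_s) (g : 'rV[R]_d) u y :
  (forall u' y', K y' ->
    dotp g u + dotp (A u - y) (A u - y) <= dotp g u' + dotp (A u' - y') (A u' - y')) ->
  forall v, tangent_cone K y v -> dotp (A u - y) v <= 0.
Proof.
move=> H v [t [vk [tp [t0 [vkv Kk]]]]].
set r := A u - y.
have cN : continuous (fun x : 'rV[R]_s => dotp x x).
  exact: (@dotp_continuous _ _ _ (@id 'rV[R]_s) id (fun x => cvg_id) (fun x => cvg_id)).
have cR : continuous (fun x : 'rV[R]_s => dotp r x).
  have := @dotp_continuous R _ s (fun=> r) id (fun x => cvg_cst r) (fun x => cvg_id); exact.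
have cv : (fun k => t k * dotp (vk k) (vk k) - 2 * dotp r (vk k)) @ \oo -->
          0 * dotp v v - 2 * dotp r v.
  apply: cvgB; first by apply: cvgM => //; exact: (continuous_cvg _ (cN v) vkv).
  by apply: cvgMl_tmp; exact: (continuous_cvg _ (cR v) vkv).
have : 0 <= 0 * dotp v v - 2 * dotp r v.
  apply: (cvgr_to_ge cv); near=> k.
  have := H u (y + t k *: vk k) (Kk k).
  rewrite opprD addrA -/r -scaleNr dotp_expand => h.
  have tk := tp k.
  rewrite -(pmulr_rge0 _ tk).
  move: h; move: (t k) tk (dotp g u) (dotp r r) (dotp r (vk k)) (dotp (vk k) (vk k)).
  move=> T tk G0 RR X N h; nra.
rewrite mul0r sub0r oppr_ge0 pmulr_rle0 //.
Unshelve. all: by end_near.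
Qed.

End Step5.

Unset Implicit Arguments.

Theorem corollary4p5 (R : realType) (d s : nat)
  (f : 'rV[R]_d -> R) (P : 'rV[R]_d -> 'rV[R]_s) (D : set 'rV[R]_s)
  (zb : 'rV[R]_d) :
  (forall z, differentiable f z) -> continuous (grad f) ->
  (forall z, differentiable P z) -> continuous (jacobian P) ->
  closed D ->
  sharp_min f [set z | D (P z)] zb ->
  GGCQ P D zb ->
  metric_subregular
    (fun u : 'rV[R]_d =>
       [set y | exists k, tangent_cone D (P zb) k /\ y = 'd P zb u - k])
    0 0 ->
  exists (w : 'rV[R]_s) (ws : 'rV[R]_s),
    tangent_cone D (P zb) w /\
    reg_normal_cone (tangent_cone D (P zb)) w ws /\
    grad f zb + ws *m (jacobian P zb)^T = 0.
Proof.
move=> Hf _ HP _ _ [Oz [al [al0 Hnear]]] gg msr.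
set K := tangent_cone D (P zb).
set g := grad f zb.
have b0 : 0 < al / 2 by rewrite divr_gt0.
have st1 : forall u, tangent_cone [set x | D (P x)] zb u -> al / 2 * `|u| <= dotp g u.
  by move=> u Tu; rewrite -diff_dotp; exact: (sharp_tangent (Hf zb) al0 Hnear).
have st2 := ggcq_growth b0 gg st1.
have Kcone : forall y l, 0 < l -> K y -> K (l *: y).
  by move=> y l l0 Ky; exact: tangent_cone_scale.
have [C [C0 HC]] := subreg_bound b0 Kcone st2 msr.
have Ac : continuous ('d P zb) := diff_continuous (HP zb).
have [u [y [Ky Hmin]]] := exists_min Ac (@tangent_cone_closed _ _ D (P zb))
  (@tangent_cone0 _ _ D (P zb) Oz) b0 C0 HC.
exists y, (2 *: ('d P zb u - y)); split => //; split.
  move=> v Tv; rewrite dotpZl pmulr_rle0 //; exact: (foc_y Hmin Tv).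
apply/rowP => j; rewrite [RHS]mxE -dotp_delta dotpDl -dotp_mulmx /jacobian mul_rV_lin1 dotpZl.
exact: (foc_u Ky Hmin).
Qed.
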